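(* Let $G=(V,E)$ be a finite simple graph, $C\subseteq V$ such that no vertex of $V\setminus C$ is isolated, and $m\ge 2$ an integer. Let $P_1$ be the convex hull of the integer feasible solutions of the integer program $F_1$ described below. Let $i\in\{2,\dots,m\}$, $k\in\{1,\dots,i\}$, $U\subseteq V$ nonempty with $|U|=p$, $N\subseteq N^p\langle U\rangle$ (possibly empty), and $W=\{w_1,\dots,w_t\}$ a nonempty set of $t$ vertices such that (H1) $W\subseteq N^p\langle U\rangle\setminus N$; (H2) $N\langle w_{r+1}\rangle\subseteq N\langle w_r\rangle$ for all $r=1,\dots,t-1$; (H3) $N\langle v\rangle\subseteq N\langle w_t\rangle$ for all $v\in N$. Let $j_1,\dots,j_{t+1}\in\{1,\dots,i\}$ be integers with $j_1=1$, $j_{t+1}=i$ and $j_r\le j_{r+1}$ for $r=1,\dots,t$. Then the inequality $$\sum_{u\in U}x_{ui}+\sum_{v\in N}y_{vi}+\sum_{r=1}^t\sum_{j=j_r}^{j_{r+1}}y_{w_rj}+\sum_{v\in N^p\langle U\rangle}(p-1)y_{vk}+\sum_{q=1}^{p-1}\sum_{v\in N^q\langle U\rangle}q\,y_{vk}\le p$$ is valid for $P_1$.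
   Context: $N\langle v\rangle = N[v]$ (closed neighborhood) if $v\in C$ and $N\langle v\rangle=N(v)$ (open neighborhood) if $v\notin C$. For nonempty $U\subseteq V$ and integer $r\ge 0$, $N^r\langle U\rangle=\{v\in V: |N\langle v\rangle\cap U|=r\}$. The integer program $F_1$ has binary variables $x_{vi},y_{vi}$ for $v\in V$, $i=1,\dots,m$, constants $x_{u0}=1$ for $u\in V$, objective $\max\sum_{i=1}^m\sum_{v\in V}y_{vi}$ and constraints: $\sum_{v\in V}y_{vi}\le 1$ ($i=1,\dots,m$); $\sum_{i=1}^m y_{vi}\le 1$ ($v\in V$); $x_{ui}\le x_{u(i-1)}$ ($u\in V$, $i=2,\dots,m$); $x_{ui}+\sum_{v\in N\langle u\rangle}y_{vi}\le 1$ ($u\in V$, $i=1,\dots,m$); $y_{vi}\le\sum_{u\in N\langle v\rangle}(x_{u(i-1)}-x_{ui})$ ($v\in V$, $i=2,\dots,m$); $x_{vi},y_{vi}\in\{0,1\}$. *)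

(* Defs.v *)
From mathcomp Require Import all_boot all_order all_algebra.
Set Implicit Arguments. Unset Strict Implicit. Unset Printing Implicit Defensive.
Import Order.TTheory GRing.Theory Num.Theory.
Local Open Scope ring_scope.

Section Defs.
Variable V : finType.

Definition simple_graph (e : rel V) : Prop := symmetric e /\ irreflexive e.

Definition nbo (e : rel V) (v : V) : {set V} := [set u | e v u].

Definition nbC (e : rel V) (C : {set V}) (v : V) : {set V} :=
  if v \in C then v |: nbo e v else nbo e v.

Definition Npow (e : rel V) (C : {set V}) (r : nat) (U : {set V}) : {set V} :=
  [set v | #|nbC e C v :&: U| == r].

(* integer feasible solutions of F_1: variables x_{vi}, y_{vi} for
   v in V, 1 <= i <= m (values at other indices are irrelevant);
   x_{u0} = 1 is a constant, implemented by xf below. *)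
Definition feasible (e : rel V) (C : {set V}) (m : nat)
    (X Y : V -> nat -> int) : Prop :=
  let xf u i := if i == 0%N then 1 else X u i in
  (forall v i, (1 <= i <= m)%N -> X v i = 0 \/ X v i = 1) /\
  (forall v i, (1 <= i <= m)%N -> Y v i = 0 \/ Y v i = 1) /\
  (forall i, (1 <= i <= m)%N -> \sum_(v : V) Y v i <= 1) /\
  (forall v, \sum_(1 <= i < m.+1) Y v i <= 1) /\
  (forall u i, (2 <= i <= m)%N -> xf u i <= xf u i.-1) /\
  (forall u i, (1 <= i <= m)%N -> xf u i + \sum_(v in nbC e C u) Y v i <= 1) /\
  (forall v i, (2 <= i <= m)%N ->
     Y v i <= \sum_(u in nbC e C v) (xf u i.-1 - xf u i)).

Definition in_P1 (R : realFieldType) (e : rel V) (C : {set V}) (m : nat)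
    (x y : V -> nat -> R) : Prop :=
  exists (n : nat) (lam : 'I_n -> R) (X Y : 'I_n -> V -> nat -> int),
    [/\ forall l, feasible e C m (X l) (Y l),
        forall l, 0 <= lam l,
        \sum_(l < n) lam l = 1,
        forall v i, (1 <= i <= m)%N -> x v i = \sum_(l < n) lam l * (X l v i)%:~R
      & forall v i, (1 <= i <= m)%N -> y v i = \sum_(l < n) lam l * (Y l v i)%:~R].

End Defs.

(* Main.v *)
Require Import Defs.
From mathcomp Require Import all_boot all_order all_algebra.
From mathcomp Require Import zify.
Import Order.TTheory GRing.Theory Num.Theory.
Local Open Scope ring_scope.

Set Implicit Arguments. Unset Strict Implicit.

Lemma f_x01 (V : finType) e C m (X Y : V -> nat -> int) v n :
  feasible e C m X Y -> (1 <= n <= m)%N -> 0 <= X v n <= 1.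
Proof. by case=> H _ Hn; case: (H v n Hn) => ->. Qed.

Lemma f_y01 (V : finType) e C m (X Y : V -> nat -> int) v n :
  feasible e C m X Y -> (1 <= n <= m)%N -> 0 <= Y v n <= 1.
Proof. by case=> _ [H _] Hn; case: (H v n Hn) => ->. Qed.

Lemma f_mono (V : finType) e C m (X Y : V -> nat -> int) u a b :
  feasible e C m X Y -> (1 <= a)%N -> (a <= b)%N -> (b <= m)%N -> X u b <= X u a.
Proof.
move=> F ha hab hbm; elim: b hab hbm => [|b IH]; first by lia.
rewrite leq_eqVlt => /orP [/eqP <- //|hab] hbm.
apply: le_trans (IH hab (ltnW hbm)).
case: F => _ [_ [_ [_ [H _]]]].
have := H u b.+1; rewrite /=.
idtac.
have -> : (b == 0)%N = false by lia.
apply; lia.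
Qed.

Lemma nbC_sym (V : finType) e C (u v : V) :
  simple_graph e -> (u \in nbC e C v) = (v \in nbC e C u).
Proof.
case=> sym irr; rewrite /nbC /nbo.
have [->|neq] := eqVneq u v; first by [].
case: (v \in C); case: (u \in C); rewrite ?inE ?(negbTE neq) ?(eq_sym v u) ?(negbTE neq) /=;
  by rewrite sym.
Qed.

Lemma f_dom (V : finType) e C m (X Y : V -> nat -> int) v u n :
  simple_graph e -> feasible e C m X Y -> (1 <= n <= m)%N -> Y v n = 1 ->
  u \in nbC e C v -> X u n = 0.
Proof.
move=> G F hn hy hu.
have [hx0 _] := andP (f_x01 u F hn).
case: (F) => _ [_ [_ [_ [_ [H _]]]]].
have := H u n hn; rewrite /=.
have -> : (n == 0)%N = false by lia.
rewrite (bigD1 v) /=; last by rewrite -nbC_sym.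
rewrite hy => h.
have : 0 <= \sum_(i in nbC e C u | i != v) Y i n.
  apply: sumr_ge0 => i _; by have [] := andP (f_y01 i F hn).
move: h; set s := \sum_(_ in _ | _) _; lia.
Qed.

Lemma f_new (V : finType) e C m (X Y : V -> nat -> int) v n :
  feasible e C m X Y -> (2 <= n <= m)%N -> Y v n = 1 ->
  exists2 u, u \in nbC e C v & X u n.-1 = 1.
Proof.
move=> F hn hy.
case: (F) => _ [_ [_ [_ [_ [_ H]]]]].
have := H v n hn; rewrite /= hy.
have -> : (n == 0)%N = false by lia.
have -> : (n.-1 == 0)%N = false by lia.
have [/existsP [u /andP [hu hx]] | /existsPn hno] := boolP [exists u in nbC e C v, X u n.-1 == 1].
  by move=> _; exists u => //; apply/eqP.
move=> h.
have : \sum_(u in nbC e C v) (X u n.-1 - X u n) <= 0.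
  apply: sumr_le0 => u hu.
  have := hno u; rewrite hu /= => hx.
  have := f_x01 u F (_ : (1 <= n.-1 <= m)%N); have := f_x01 u F (_ : (1 <= n <= m)%N).
  move: hx; lia.
move: h; set s := \sum_(_ in _) _; lia.
Qed.

Lemma f_excl (V : finType) e C m (X Y : V -> nat -> int) v v' n :
  feasible e C m X Y -> (1 <= n <= m)%N -> v != v' -> Y v n = 1 -> Y v' n = 0.
Proof.
move=> F hn hne hy.
case: (F) => _ [_ [H _]].
have := H n hn; rewrite (bigD1 v) //= (bigD1 v') //=; last by rewrite eq_sym. rewrite hy.
have : 0 <= \sum_(i | (i != v) && (i != v')) Y i n.
  apply: sumr_ge0 => i _; by have [] := andP (f_y01 i F hn).
have [] := andP (f_y01 v' F hn).
set s := \sum_(_ | _) _; lia.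
Qed.

Lemma f_K (V : finType) e C m (X Y : V -> nat -> int) v z a b :
  simple_graph e -> feasible e C m X Y -> (1 <= a)%N -> (a < b)%N -> (b <= m)%N ->
  Y v a = 1 -> Y z b = 1 -> nbC e C z \subset nbC e C v -> False.
Proof.
move=> G F ha hab hb hv hz sub.
have hb2 : (2 <= b <= m)%N by lia.
have [u hu hx] := f_new F hb2 hz.
have hu' : u \in nbC e C v by apply: (subsetP sub).
have ha2 : (1 <= a <= m)%N by lia.
have h0 := f_dom G F ha2 hv hu'.
have h1 : (a <= b.-1)%N by lia.
have h2 : (b.-1 <= m)%N by lia.
have := f_mono u F ha h1 h2.
by rewrite hx h0.
Qed.

Lemma sum_nz (T : eqType) (s : seq T) (f : T -> int) :
  \sum_(x <- s) f x != 0 -> exists2 x, x \in s & f x != 0.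
Proof.
move=> h; have [/hasP [x hx hf]|/hasPn hn] := boolP (has (fun x => f x != 0) s).
  by exists x.
move: h; rewrite big1_seq // => x /andP [_ hx]; have := hn x hx; by move/negPn/eqP.
Qed.

Lemma sum_le1 (T : eqType) (s : seq T) (f : T -> int) :
  uniq s -> (forall x, x \in s -> 0 <= f x <= 1) ->
  (forall x y, x \in s -> y \in s -> x != y -> f x = 0 \/ f y = 0) ->
  \sum_(x <- s) f x <= 1.
Proof.
elim: s => [|a s IH]; first by rewrite big_nil.
rewrite /= => /andP [ha hu] h01 hp; rewrite big_cons.
have [fa0 fa1] := andP (h01 a (mem_head a s)).
have [ha0|hne] := eqVneq (f a) 0.
  rewrite ha0 add0r; apply: IH => // [x hx|x y hx hy]; [apply: h01|apply: hp]; by rewrite inE ?hx ?hy orbT.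
rewrite big1_seq ?addr0 // => x /andP [_ hx].
have hxa : a != x by apply: contraNneq ha => ->.
case: (hp a x (mem_head a s) _ hxa) => //; first by rewrite inE hx orbT.
by move=> h; move: hne; rewrite h eqxx.
Qed.

Lemma chain (V : finType) (P : nat -> {set V}) t :
  (forall r, (1 <= r < t)%N -> P r.+1 \subset P r) ->
  forall r s, (1 <= r)%N -> (r <= s)%N -> (s <= t)%N -> P s \subset P r.
Proof.
move=> H r s hr; elim: s => [|s IH]; first by lia.
rewrite leq_eqVlt => /orP [/eqP <- //|hrs] hs.
apply: subset_trans (IH hrs (ltnW hs)); apply: H; lia.
Qed.

Lemma jmono (j : nat -> nat) t :
  (forall r, (1 <= r <= t)%N -> (j r <= j r.+1)%N) ->
  forall r s, (1 <= r)%N -> (r <= s)%N -> (s <= t.+1)%N -> (j r <= j s)%N.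
Proof.
move=> H r s hr; elim: s => [|s IH]; first by lia.
rewrite leq_eqVlt => /orP [/eqP <- //|hrs] hs.
apply: leq_trans (IH hrs (ltnW hs)) _; apply: H; lia.
Qed.

Lemma sub_range (f : nat -> int) lo a b hi :
  (lo <= a)%N -> (a <= b)%N -> (b <= hi)%N ->
  (forall n, (lo <= n < hi)%N -> 0 <= f n) ->
  \sum_(a <= n < b) f n <= \sum_(lo <= n < hi) f n.
Proof.
move=> h1 h2 h3 hf.
rewrite (big_cat_nat h1 (leq_trans h2 h3)) (big_cat_nat h2 h3) /=.
have p1 : 0 <= \sum_(lo <= n < a) f n.
  rewrite big_seq_cond; apply: sumr_ge0 => n /andP [hn _]; apply: hf.
  move: hn; rewrite mem_index_iota; lia.
have p2 : 0 <= \sum_(b <= n < hi) f n.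
  rewrite big_seq_cond; apply: sumr_ge0 => n /andP [hn _]; apply: hf.
  move: hn; rewrite mem_index_iota; lia.
move: p1 p2; set s1 := \sum_(lo <= n < a) f n; set s2 := \sum_(b <= n < hi) f n;
  set s3 := \sum_(a <= n < b) f n; lia.
Qed.

Lemma f_window (V : finType) e C m (X Y : V -> nat -> int) v a b :
  feasible e C m X Y -> (1 <= a)%N -> (b <= m)%N ->
  0 <= \sum_(a <= n < b.+1) Y v n <= 1.
Proof.
move=> F ha hb; apply/andP; split.
  rewrite big_seq_cond; apply: sumr_ge0 => n /andP [hn _].
  move: hn; rewrite mem_index_iota => hn.
  have hn' : (1 <= n <= m)%N by lia.
  by have [] := andP (f_y01 v F hn').
have [hab|hba] := leqP a b.+1; last first.
  by rewrite big_geq //; lia.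
apply: le_trans (_ : \sum_(1 <= n < m.+1) Y v n <= 1); last by case: F => _ [_ [_ [H _]]]; apply: H.
apply: sub_range => //; try lia.
move=> n hn; have hn' : (1 <= n <= m)%N by lia.
by have [] := andP (f_y01 v F hn').
Qed.

Lemma Npow_full (V : finType) e C (U : {set V}) v :
  v \in Npow e C #|U| U -> U \subset nbC e C v.
Proof.
rewrite /Npow inE => /eqP h.
have : nbC e C v :&: U == U by rewrite eqEcard subsetIr h leqnn.
by move/eqP <-; apply: subsetIl.
Qed.

Lemma cover0 (V : finType) e C m (X Y : V -> nat -> int) (U : {set V}) v a i :
  simple_graph e -> feasible e C m X Y -> (1 <= a)%N -> (a <= i)%N -> (i <= m)%N ->
  v \in Npow e C #|U| U -> Y v a = 1 -> \sum_(u in U) X u i = 0.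
Proof.
move=> G F ha hai him hv hy; apply: big1 => u hu.
have hu' : u \in nbC e C v by apply: (subsetP (Npow_full hv)).
have ha' : (1 <= a <= m)%N by lia.
have h0 := f_dom G F ha' hy hu'.
have := f_mono u F ha hai him; rewrite h0.
have hi : (1 <= i <= m)%N by lia.
have [] := andP (f_x01 u F hi); lia.
Qed.

Lemma sum_if_eq (s : seq nat) a (g : nat -> int) :
  uniq s -> \sum_(q <- s) (if a == q then g q else 0) = if a \in s then g a else 0.
Proof.
elim: s => [|b s IH]; first by rewrite big_nil.
rewrite /= => /andP [hb hu]; rewrite big_cons IH // inE.
have [->|hne] := eqVneq a b; first by rewrite (negbTE hb) addr0.
by rewrite add0r.
Qed.

Lemma partD (V : finType) e C m (X Y : V -> nat -> int) (U : {set V}) i k :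
  simple_graph e -> feasible e C m X Y -> (1 <= k <= i)%N -> (i <= m)%N ->
  U != set0 ->
  let D := \sum_(v in Npow e C #|U| U) (#|U| - 1)%:R * Y v k
    + \sum_(1 <= q < #|U|) \sum_(v in Npow e C q U) q%:R * Y v k in
  D <= (#|U| - 1)%:R /\ \sum_(u in U) X u i + D <= #|U|%:R.
Proof.
move=> G F hk him hU D.
set p := #|U|.
have hp : (0 < p)%N by rewrite card_gt0.
have hkm : (1 <= k <= m)%N by lia.
pose c v : int := (if v \in Npow e C p U then (p - 1)%:R else 0)
   + \sum_(1 <= q < p) (if v \in Npow e C q U then q%:R else 0).
have hD : D = \sum_v Y v k * c v.
  rewrite /D /c.
  under [RHS]eq_bigr => v _ do rewrite mulrDr mulr_sumr.
  rewrite big_split /=; congr (_ + _).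
    rewrite big_mkcond; apply: eq_bigr => v _; case: ifP => _; by rewrite ?mulr0 // mulrC.
  rewrite exchange_big /=; apply: eq_bigr => q _; rewrite big_mkcond; apply: eq_bigr => v _.
  case: ifP => _; by rewrite ?mulr0 // mulrC.
have hc : forall v, c v <= (p - 1)%:R /\ c v <= #|nbC e C v :&: U|%:R.
  move=> v; rewrite /c /Npow !inE.
  under eq_bigr => q _ do rewrite inE.
  rewrite sum_if_eq ?iota_uniq // mem_index_iota.
  have : (#|nbC e C v :&: U| <= p)%N by apply: subset_leq_card; apply: subsetIr.
  set qv := #|nbC e C v :&: U|.
  case: eqP => h1; case: ifP => h2; split; lia.
have hY : forall v, 0 <= Y v k <= 1 by move=> v; apply: f_y01 F hkm.
have hsY : \sum_v Y v k <= 1 by case: F => _ [_ [H _]]; apply: H.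
split.
  rewrite hD; apply: le_trans (_ : \sum_v Y v k * (p - 1)%:R <= _).
    apply: ler_sum => v _; apply: ler_wpM2l; first by have [] := andP (hY v).
    by case: (hc v).
  rewrite -mulr_suml.
  have : 0 <= \sum_v Y v k by apply: sumr_ge0 => v _; have [] := andP (hY v).
  move: hsY; set s := \sum_v Y v k; nia.
have [/existsP [v0 hv0] | /existsPn hno] := boolP [exists v, Y v k != 0].
  have hv1 : Y v0 k = 1 by move: hv0 (hY v0); lia.
  have -> : D = c v0.
    rewrite hD (bigD1 v0) //= big1 ?addr0 ?hv1 ?mul1r // => v hv.
    by rewrite (f_excl F hkm _ hv1) ?mul0r // eq_sym.
  rewrite (@big_setID _ _ _ _ U (nbC e C v0)) /=.
  rewrite big1 ?add0r; last first.
    move=> u /setIP [hu hu'].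
    have h0 := f_dom G F hkm hv1 hu'.
    have him' : (1 <= i <= m)%N by lia.
    have := f_mono u F (_ : (1 <= k)%N) (_ : (k <= i)%N) him; rewrite h0.
    have [] := andP (f_x01 u F him'); move=> a b c'; apply/eqP; rewrite eq_le c' ?a //; lia.
  apply: le_trans (_ : \sum_(u in U :\: nbC e C v0) 1 + c v0 <= _).
    rewrite lerD2r; apply: ler_sum => u _.
    have him' : (1 <= i <= m)%N by lia.
    by have [] := andP (f_x01 u F him').
  rewrite sumr_const cardsD setIC.
  have := (hc v0).2.
  have : (#|nbC e C v0 :&: U| <= p)%N by apply: subset_leq_card; apply: subsetIr.
  set qv := #|nbC e C v0 :&: U|; rewrite -/p; lia.
have -> : D = 0.
  rewrite hD big1 // => v _; have := hno v; rewrite negbK => /eqP ->; by rewrite mul0r.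
rewrite addr0; apply: le_trans (_ : \sum_(u in U) 1 <= _).
  apply: ler_sum => u _.
  have him' : (1 <= i <= m)%N by lia.
  by have [] := andP (f_x01 u F him').
by rewrite sumr_const.
Qed.

Lemma partS (V : finType) e C m (X Y : V -> nat -> int) (U N : {set V}) i t
    (w : nat -> V) (j : nat -> nat) :
  simple_graph e -> feasible e C m X Y -> (2 <= i <= m)%N ->
  N \subset Npow e C #|U| U ->
  (forall r s, (1 <= r <= t)%N -> (1 <= s <= t)%N -> w r = w s -> r = s) ->
  (forall r, (1 <= r <= t)%N -> w r \in Npow e C #|U| U :\: N) ->
  (forall r, (1 <= r < t)%N -> nbC e C (w r.+1) \subset nbC e C (w r)) ->
  (forall v, v \in N -> nbC e C v \subset nbC e C (w t)) ->
  (forall r, (1 <= r <= t.+1)%N -> (1 <= j r <= i)%N) ->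
  (forall r, (1 <= r <= t)%N -> (j r <= j r.+1)%N) ->
  let B := \sum_(v in N) Y v i in
  let Cw := \sum_(1 <= r < t.+1) \sum_(j r <= jj < (j r.+1).+1) Y (w r) jj in
  [/\ 0 <= B, 0 <= Cw, B + Cw <= 1 & (B + Cw != 0 -> \sum_(u in U) X u i = 0)].
Proof.
move=> G F hi hN winj H1 H2 H3 hj hjm B Cw.
have him : (1 <= i <= m)%N by lia.
pose Fr r := \sum_(j r <= jj < (j r.+1).+1) Y (w r) jj.
have hF01 : forall r, (1 <= r <= t)%N -> 0 <= Fr r <= 1.
  move=> r hr; apply: f_window F _ _.
    by have := hj r; lia.
  by have := hj r.+1; lia.
have hfire : forall r, (1 <= r <= t)%N -> Fr r != 0 ->
    exists2 a, (j r <= a <= j r.+1)%N & Y (w r) a = 1.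
  move=> r hr /sum_nz [a]; rewrite mem_index_iota => ha hy.
  exists a; first by lia.
  have ham : (1 <= a <= m)%N by have := hj r; have := hj r.+1; lia.
  by move: hy (f_y01 (w r) F ham); lia.
have hB0 : 0 <= B.
  apply: sumr_ge0 => v _; by have [] := andP (f_y01 v F him).
have hCw0 : 0 <= Cw.
  rewrite /Cw big_seq_cond; apply: sumr_ge0 => r /andP [hr _].
  move: hr; rewrite mem_index_iota => hr.
  have hr' : (1 <= r <= t)%N by lia.
  by have [] := andP (hF01 r hr').
have hwr : forall r, (1 <= r <= t)%N -> w r \in Npow e C #|U| U /\ w r \notin N.
  by move=> r hr; have := H1 r hr; rewrite inE => /andP [].
have hsub : forall r s, (1 <= r)%N -> (r <= s)%N -> (s <= t)%N ->
    nbC e C (w s) \subset nbC e C (w r).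
  by apply: (chain (P := fun r => nbC e C (w r))).
have hpw : forall r s, (1 <= r)%N -> (r < s)%N -> (s <= t)%N -> Fr r != 0 -> Fr s != 0 -> False.
  move=> r s hr hrs hs nr ns.
  have hr1 : (1 <= r <= t)%N by lia.
  have hs1 : (1 <= s <= t)%N by lia.
  have [a ha hya] := hfire r hr1 nr.
  have [b hb hyb] := hfire s hs1 ns.
  have hjrs : (j r.+1 <= j s)%N by apply: (jmono hjm); lia.
  have ham : (1 <= a <= m)%N by have := hj r; have := hj r.+1; lia.
  have hbm : (1 <= b <= m)%N by have := hj s; have := hj s.+1; lia.
  have [hab|hab] : (a < b)%N \/ a = b by lia.
    have h1 : (1 <= a)%N by lia.
    have h2 : (b <= m)%N by lia.
    apply: (f_K G F h1 hab h2 hya hyb).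
    apply: hsub; lia.
  subst b.
  have hne : w r != w s.
    apply/eqP => h; have := winj r s hr1 hs1 h; lia.
  by move: (f_excl F ham hne hya); rewrite hyb.
have hCw1 : Cw <= 1.
  apply: sum_le1; first by apply: iota_uniq.
    move=> r; rewrite mem_index_iota => hr; apply: hF01; lia.
  move=> r s; rewrite !mem_index_iota => hr hs hne.
  have [nr|nr] := eqVneq (Fr r) 0; first by left.
  have [ns|ns] := eqVneq (Fr s) 0; first by right.
  exfalso; have [hrs|hrs] : (r < s)%N \/ (s < r)%N by move: hne => /eqP; lia.
    by apply: (hpw r s) => //; lia.
  by apply: (hpw s r) => //; lia.
have hB1 : B <= 1.
  apply: le_trans (_ : \sum_v Y v i <= 1); last by case: F => _ [_ [H _]]; apply: H.
  rewrite [X in _ <= X](bigID (fun v => v \in N)) /= lerDl.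
  apply: sumr_ge0 => v _; by have [] := andP (f_y01 v F him).
have [/existsP [v /andP [hv hy]] | /existsPn hno] := boolP [exists v in N, Y v i != 0].
  have hy1 : Y v i = 1 by move: hy (f_y01 v F him); lia.
  have hCw : Cw = 0.
    rewrite /Cw big_seq_cond big1 // => r /andP [hr _].
    move: hr; rewrite mem_index_iota => hr.
    have hr' : (1 <= r <= t)%N by lia.
    apply/eqP; apply/negPn/negP => nr.
    have [a ha hya] := hfire r hr' nr.
    have hai : (a <= i)%N by have := hj r.+1; lia.
    have ham : (1 <= a <= m)%N by have := hj r; lia.
    have [hlt|heq] : (a < i)%N \/ a = i by lia.
      have h1 : (1 <= a)%N by lia.
      have h2 : (i <= m)%N by lia.
      apply: (f_K G F h1 hlt h2 hya hy1).
      apply: subset_trans (H3 v hv) _; apply: hsub; lia.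
    subst a.
    have hne : w r != v by apply: contraNneq (hwr r hr').2 => ->.
    by move: (f_excl F him hne hya); rewrite hy1.
  rewrite hCw addr0; split => // _.
  have h1 : (1 <= i)%N by lia.
  have h2 : (i <= m)%N by lia.
  exact: (cover0 G F h1 (leqnn i) h2 (subsetP hN v hv) hy1).
have hB : B = 0.
  rewrite /B big1 // => v hv; have := hno v; rewrite hv /= negbK => /eqP //.
rewrite hB add0r; split => // hnz.
have [r] := sum_nz hnz; rewrite mem_index_iota => hr nr.
have hr' : (1 <= r <= t)%N by lia.
have [a ha hya] := hfire r hr' nr.
have h1 : (1 <= a)%N by have := hj r; lia.
have h2 : (a <= i)%N by have := hj r.+1; lia.
have h3 : (i <= m)%N by lia.
exact: (cover0 G F h1 h2 h3 (hwr r hr').1 hya).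
Qed.

Definition expr (R : pzRingType) (V : finType) (e : rel V) (C : {set V}) (U N : {set V})
  (t : nat) (w : nat -> V) (j : nat -> nat) (i k : nat) (x y : V -> nat -> R) : R :=
    \sum_(u in U) x u i
    + \sum_(v in N) y v i
    + \sum_(1 <= r < t.+1) \sum_(j r <= jj < (j r.+1).+1) y (w r) jj
    + \sum_(v in Npow e C #|U| U) (#|U| - 1)%:R * y v k
    + \sum_(1 <= q < #|U|) \sum_(v in Npow e C q U) q%:R * y v k.

Lemma core (V : finType) (e : rel V) (C : {set V})
    (m : nat) (i k : nat) (U N : {set V}) (t : nat) (w : nat -> V) (j : nat -> nat)
    (X Y : V -> nat -> int) :
  simple_graph e ->
  (2 <= i <= m)%N ->
  (1 <= k <= i)%N ->
  U != set0 ->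
  N \subset Npow e C #|U| U ->
  (forall r s, (1 <= r <= t)%N -> (1 <= s <= t)%N -> w r = w s -> r = s) ->
  (forall r, (1 <= r <= t)%N -> w r \in Npow e C #|U| U :\: N) ->
  (forall r, (1 <= r < t)%N -> nbC e C (w r.+1) \subset nbC e C (w r)) ->
  (forall v, v \in N -> nbC e C v \subset nbC e C (w t)) ->
  (forall r, (1 <= r <= t.+1)%N -> (1 <= j r <= i)%N) ->
  (forall r, (1 <= r <= t)%N -> (j r <= j r.+1)%N) ->
  feasible e C m X Y ->
  expr e C U N t w j i k X Y <= #|U|%:R.
Proof.
move=> G hi hk hU hN winj H1 H2 H3 hj hjm F.
have him : (i <= m)%N by lia.
have [hD1 hD2] := partD G F hk him hU.
have [hB hC hBC hA] := partS G F hi hN winj H1 H2 H3 hj hjm.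
have hp : (0 < #|U|)%N by rewrite card_gt0.
rewrite /expr -addrA.
move: hD1 hD2 hB hC hBC hA.
set A := \sum_(u in U) X u i.
set B := \sum_(v in N) Y v i.
set Cw := \sum_(1 <= r < t.+1) _.
set D := \sum_(v in Npow e C #|U| U) _ + _.
move=> h1 h2 h3 h4 h5 h6.
have [h|h] := eqVneq (B + Cw) 0; first by move: h; lia.
have := h6 h; lia.
Qed.

Lemma swap (R : pzRingType) (T : Type) (n : nat) (lam : 'I_n -> R) (s : seq T) (P : pred T)
   (g : 'I_n -> T -> R) :
  \sum_(x <- s | P x) \sum_(l < n) lam l * g l x = \sum_(l < n) lam l * \sum_(x <- s | P x) g l x.
Proof. rewrite exchange_big; apply: eq_bigr => l _; by rewrite mulr_sumr. Qed.

Lemma expr_lin (R : comPzRingType) (V : finType) e C U N t w j i k n (lam : 'I_n -> R)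
   (a b : 'I_n -> V -> nat -> R) :
  expr e C U N t w j i k (fun v q => \sum_(l < n) lam l * a l v q)
     (fun v q => \sum_(l < n) lam l * b l v q)
  = \sum_(l < n) lam l * expr e C U N t w j i k (a l) (b l).
Proof.
rewrite /expr.
under [RHS]eq_bigr => l _ do rewrite !mulrDr.
rewrite !big_split /= !swap.
congr (_ + _ + _ + _ + _).
- under eq_bigr => r _ do rewrite swap. by rewrite swap.
- under eq_bigr => v _ do rewrite mulr_sumr.
  under eq_bigr => v _ do under eq_bigr => l _ do rewrite mulrCA.
  by rewrite swap.
- under eq_bigr => q _ do under eq_bigr => v _ do rewrite mulr_sumr.
  under eq_bigr => q _ do under eq_bigr => v _ do under eq_bigr => l _ do rewrite mulrCA.
  under eq_bigr => q _ do rewrite swap.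
  by rewrite swap.
Qed.

Lemma expr_cast (R : comPzRingType) (V : finType) e C U N t w j i k (X Y : V -> nat -> int) :
  expr e C U N t w j i k (fun v q => (X v q)%:~R : R) (fun v q => (Y v q)%:~R)
  = (expr e C U N t w j i k X Y)%:~R.
Proof.
rewrite /expr !rmorphD !rmorph_sum /=.
congr (_ + _ + _ + _ + _).
- by apply: eq_bigr => r _; rewrite rmorph_sum.
- by apply: eq_bigr => v _; rewrite rmorphM /= rmorph_nat.
- apply: eq_bigr => q _; rewrite rmorph_sum; apply: eq_bigr => v _.
  by rewrite rmorphM /= rmorph_nat.
Qed.

Lemma expr_ext (R : pzRingType) (V : finType) e C U N t w j i k m (x y x' y' : V -> nat -> R) :
  (1 <= i <= m)%N -> (1 <= k <= m)%N ->
  (forall r, (1 <= r <= t.+1)%N -> (1 <= j r <= i)%N) ->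
  (forall v q, (1 <= q <= m)%N -> x v q = x' v q) ->
  (forall v q, (1 <= q <= m)%N -> y v q = y' v q) ->
  expr e C U N t w j i k x y = expr e C U N t w j i k x' y'.
Proof.
move=> hi hk hj hx hy; rewrite /expr.
congr (_ + _ + _ + _ + _).
- by apply: eq_bigr => u _; rewrite hx.
- by apply: eq_bigr => u _; rewrite hy.
- rewrite big_seq_cond [RHS]big_seq_cond; apply: eq_bigr => r /andP [hr _].
  move: hr; rewrite mem_index_iota => hr.
  have := hj r; have := hj r.+1.
  move=> h1 h2.
  rewrite big_seq_cond [RHS]big_seq_cond; apply: eq_bigr => q /andP [hq _].
  move: hq; rewrite mem_index_iota => hq.
  rewrite hy //.
  have : (1 <= r <= t.+1)%N by lia.
  have : (1 <= r.+1 <= t.+1)%N by lia.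
  move=> /h1 ? /h2 ?; lia.
- by apply: eq_bigr => u _; rewrite hy.
- apply: eq_bigr => q _; by apply: eq_bigr => u _; rewrite hy.
Qed.

Unset Implicit Arguments. Set Strict Implicit.

Theorem theorem2 (R : realFieldType) (V : finType) (e : rel V) (C : {set V})
    (m : nat) (i k : nat) (U N : {set V}) (t : nat) (w : nat -> V) (j : nat -> nat) :
  simple_graph e ->
  (forall v, v \notin C -> exists u, e v u) ->
  (2 <= m)%N ->
  (2 <= i <= m)%N ->
  (1 <= k <= i)%N ->
  U != set0 ->
  N \subset Npow e C #|U| U ->
  (1 <= t)%N ->
  (forall r s, (1 <= r <= t)%N -> (1 <= s <= t)%N -> w r = w s -> r = s) ->
  (* H1 *) (forall r, (1 <= r <= t)%N -> w r \in Npow e C #|U| U :\: N) ->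
  (* H2 *) (forall r, (1 <= r < t)%N -> nbC e C (w r.+1) \subset nbC e C (w r)) ->
  (* H3 *) (forall v, v \in N -> nbC e C v \subset nbC e C (w t)) ->
  (forall r, (1 <= r <= t.+1)%N -> (1 <= j r <= i)%N) ->
  j 1%N = 1%N -> j t.+1 = i ->
  (forall r, (1 <= r <= t)%N -> (j r <= j r.+1)%N) ->
  forall x y : V -> nat -> R, in_P1 e C m x y ->
    \sum_(u in U) x u i
    + \sum_(v in N) y v i
    + \sum_(1 <= r < t.+1) \sum_(j r <= jj < (j r.+1).+1) y (w r) jj
    + \sum_(v in Npow e C #|U| U) (#|U| - 1)%:R * y v k
    + \sum_(1 <= q < #|U|) \sum_(v in Npow e C q U) q%:R * y v k
    <= #|U|%:R.
Proof.
move=> G _ _ hi hk hU hN _ winj H1 H2 H3 hj _ _ hjm x y [n [lam [X [Y [hF hl hs hx hy]]]]].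
change (expr e C U N t w j i k x y <= #|U|%:R).
have hi' : (1 <= i <= m)%N by lia.
have hk' : (1 <= k <= m)%N by lia.
rewrite (@expr_ext _ _ e C U N t w j i k m x y _ _ hi' hk' hj hx hy).
rewrite expr_lin.
apply: le_trans (_ : \sum_(l < n) lam l * #|U|%:R <= _); last by rewrite -mulr_suml hs mul1r.
apply: ler_sum => l _; apply: ler_wpM2l => //.
rewrite expr_cast.
have := core G hi hk hU hN winj H1 H2 H3 hj hjm (hF l).
rewrite -(ler_int R) => h; apply: le_trans h _.
by rewrite rmorph_nat.
Qed.
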